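(* Let $f\in F$ be strongly positive and let $w=x_{i_m}\cdots x_{i_1}$ ($i_k\ge1$) be any expression for $f$ as a product of $x_1,x_2,\dots$. Consider rewriting $w$ by repeatedly applying operations that replace a subword $x_kx_n$ with $k<n-1$ by $x_{n-1}x_k$ (which is valid in $F$). Then any sequence of such operations has at most $\binom{c(f)}{2}$ steps, and when no operation is applicable the resulting word is the anti-normal form of $f$, i.e. the unique expression $x_{j_m}\cdots x_{j_1}$ of $f$ with $j_{k+1}\ge j_k-1$ for all $k$.
   Context: Thompson's group $F=\langle x_0,x_1,x_2,\dots\mid x_nx_k=x_kx_{n+1}\text{ for }k<n\rangle$. An element is strongly positive if it lies in the submonoid generated by $x_1,x_2,\dots$. Every strongly positive $f$ has a unique expression $x_{j_m}\cdots x_{j_1}$ ($j_k\ge1$) with $j_{k+1}\ge j_k-1$ for all $k$ (its anti-normal form). $c(f)$ denotes the number of letters in any expression of $f$ as a product of $x_1,x_2,\dots$ (this number is independent of the expression since all relations are length-preserving; it equals the number of carets in the reduced forest diagram of $f$). *)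

(* Defs.v *)
From mathcomp Require Import all_boot.
Set Implicit Arguments. Unset Strict Implicit. Unset Printing Implicit Defensive.

(* A word x_{i_m} ... x_{i_1} in the generators x_1, x_2, ... of Thompson's
   group F is represented by the list [:: i_m; ...; i_1] of its indices,
   read left to right exactly as written. *)
Definition word := seq nat.

Definition sp_word (w : word) : Prop := all (fun i => 0 < i) w.

Definition F_rel (u v : word) : Prop :=
  exists (a b : word) (k n : nat),
    k < n /\ u = a ++ [:: n; k] ++ b /\ v = a ++ [:: k; n.+1] ++ b.

Inductive F_eq : word -> word -> Prop :=
| F_eq_refl u : F_eq u u
| F_eq_rel u v : F_rel u v -> F_eq u v
| F_eq_sym u v : F_eq u v -> F_eq v u
| F_eq_trans u v w : F_eq u v -> F_eq v w -> F_eq u w.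

Definition rw_step (u v : word) : Prop :=
  exists (a b : word) (k n : nat),
    k < n - 1 /\ u = a ++ [:: k; n] ++ b /\ v = a ++ [:: n - 1; k] ++ b.

Inductive rw_steps : word -> word -> nat -> Prop :=
| rw_nil u : rw_steps u u 0
| rw_cons u v w t : rw_step u v -> rw_steps v w t -> rw_steps u w t.+1.

Definition rw_terminal (u : word) : Prop := ~ exists v, rw_step u v.

(* Anti-normal form condition: for u = x_{j_m} ... x_{j_1} (list [:: j_m; ...; j_1]),
   all j_k >= 1 and j_{k+1} >= j_k - 1 for all k.  In the list, j_{k+1} is at
   position i and j_k at position i+1. *)
Definition anti_normal (u : word) : Prop :=
  sp_word u /\
  forall i, i.+1 < size u -> nth 0 u i.+1 - 1 <= nth 0 u i.

(* c(f) for f represented by w: number of letters of any positive expression *)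
Definition c_of (w : word) : nat := size w.

(* Main.v *)
Require Import Defs.
From mathcomp Require Import all_boot zify.

Lemma split4 {T : Type} (A B a b : seq T) k n y :
  A ++ k :: n :: B = a ++ y :: b ->
  (exists C, a = A ++ k :: n :: C /\ B = C ++ y :: b) \/
  (a = rcons A k /\ n = y /\ B = b) \/
  (A = a /\ k = y /\ b = n :: B) \/
  (exists A', A = a ++ y :: A' /\ b = A' ++ k :: n :: B).
Proof.
elim: A a => [|z A IH] [|x a] /=.
- case=> -> ->; right; right; left; done.
- case=> ? E; subst; case: a E => [|x' a] /=.
  + by case=> -> ->; right; left.
  + by case=> -> ->; left; exists a.
- case=> ? ?; subst; right; right; right; by exists A.
- case=> -> /IH [[C [-> ->]]|[[-> [-> ->]]|[[-> [-> ->]]|[A' [-> ->]]]]].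
  + by left; exists C.
  + by right; left.
  + by right; right; left.
  + by right; right; right; exists A'.
Qed.

Definition J (y : nat) (b : seq nat) := forall g, g < size b -> nth 0 b g <= y + g.+1.

Lemma J_step y b b1 : rw_step b b1 -> J y b -> J y b1.
Proof.
case=> [B1 [B2 [k [n [Hkn [-> ->]]]]]] Hb g Hg.
have Hs : size (B1 ++ [:: n - 1; k] ++ B2) = size (B1 ++ [:: k; n] ++ B2) by rewrite !size_cat.
rewrite Hs in Hg.
have E1 := Hb g Hg.
rewrite !nth_cat /= in E1 *.
move: E1; case: (ltnP g (size B1)) => H1 // E1.
case E: (g - size B1) => [|[|g']] /=.
- have := Hb g.+1. rewrite nth_cat. have -> : g.+1 < size B1 = false by lia.
  have -> : g.+1 - size B1 = 1 by lia. rewrite /=. move=> H; have := H ltac:(rewrite size_cat /=; lia). lia.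
- have := Hb g.-1. rewrite nth_cat. have -> : g.-1 < size B1 = false by lia.
  have -> : g.-1 - size B1 = 0 by lia. rewrite /=. move=> H; have := H ltac:(rewrite size_cat /=; lia). lia.
- rewrite E /= in E1. exact E1.
Qed.

Lemma key u s t : rw_steps u s t -> forall n a y b, u = a ++ y :: b -> J y b ->
  (forall r t', rw_steps (a ++ b) r t' -> t' <= n) -> t <= n + size a.
Proof.
elim => [u0|u0 v w0 t0 Hs Hrest IH] n a y b E Jb Hn; first by lia.
have Hn1 : forall c, rw_step (a ++ b) c -> 1 <= n /\ forall r t', rw_steps c r t' -> t' <= n - 1.
  move=> c Hc; split; first exact: (Hn _ _ (rw_cons Hc (rw_nil c))).
  move=> r t' Hr; have := Hn _ _ (rw_cons Hc Hr); lia.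
case: Hs => [A [B [k [m [Hkm [Eu Ev]]]]]].
rewrite Eu /= in E.
case: (split4 _ _ _ _ _ _ _ E) => [[C [Ea EB]]|[[Ea [Em EB]]|[[EA [Ek Eb]]|[A' [EA Eb]]]]]; subst.
- have Hc : rw_step ((A ++ [:: k, m & C]) ++ b) ((A ++ [:: m - 1, k & C]) ++ b).
    exists A, (C ++ b), k, m; split => //; by rewrite -!catA.
  have [H1 H2] := Hn1 _ Hc.
  have := IH (n - 1) (A ++ [:: m - 1, k & C]) y b ltac:(by rewrite /= -!catA) Jb H2.
  rewrite !size_cat /=. lia.
- have J1 : J (y - 1) (k :: b).
    move=> [|g] /= Hg; first by lia.
    have := Jb g Hg; lia.
  have := IH n A (y - 1) (k :: b) ltac:(by []) J1 ltac:(by move=> r t'; rewrite -cat_rcons; apply: Hn).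
  rewrite size_rcons; lia.
- have := Jb 0 ltac:(by []); rewrite /=; lia.
- have Hc : rw_step (a ++ A' ++ [:: k, m & B]) (a ++ A' ++ [:: m - 1, k & B]).
    exists (a ++ A'), B, k, m; split => //; by rewrite -!catA.
  have [H1 H2] := Hn1 _ Hc.
  have Jb1 : J y (A' ++ [:: m - 1, k & B]).
    apply: J_step Jb; exists A', B, k, m; done.
  have := IH (n - 1) a y (A' ++ [:: m - 1, k & B]) ltac:(by rewrite /= -!catA) Jb1 H2.
  lia.
Qed.

Lemma bound m : forall s, size s = m -> forall s' t, rw_steps s s' t -> t <= 'C(m, 2).
Proof.
elim: m => [|m IH] s Hs s' t H.
- case: H Hs => // u v w0 t0 [A [B [k [n [_ [-> _]]]]]].
  rewrite size_cat /= => Hs0; lia.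
- case/lastP: s Hs H => [//|s0 y] Hs H.
  have {}Hs : size s0 = m by move: Hs; rewrite size_rcons; lia.
  have := @key _ _ _ H 'C(m, 2) s0 y [::] ltac:(by rewrite cats1) ltac:(by move=> g).
  rewrite cats0 binS bin1 Hs addnC => -> //.
  move=> r t'; exact: IH.
Qed.

Lemma step_props u v : rw_step u v -> (sp_word u -> sp_word v) /\ F_eq u v.
Proof.
case=> [A [B [k [n [Hkn [-> ->]]]]]]; split.
- rewrite /sp_word !all_cat /= => /and3P [-> /and3P [Hk _ _] ->].
  rewrite Hk !andbT /=; apply/ltP; lia.
- apply: F_eq_sym; apply: F_eq_rel; exists A, B, k, (n - 1); split => //; split => //.
  by have -> : (n - 1).+1 = n by lia.
Qed.

Lemma steps_props u v t : rw_steps u v t -> (sp_word u -> sp_word v) /\ F_eq u v.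
Proof.
elim => [u0|u0 v0 w0 t0 Hs _ [IH1 IH2]]; first by split => //; exact: F_eq_refl.
have [H1 H2] := step_props _ _ Hs; split; first by move=> /H1 /IH1.
exact: F_eq_trans H2 IH2.
Qed.

Lemma term_anti u : sp_word u -> rw_terminal u -> anti_normal u.
Proof.
move=> Hsp Ht; split => // i Hi.
rewrite leqNgt; apply/negP => Hlt; apply: Ht.
exists (take i u ++ [:: nth 0 u i.+1 - 1; nth 0 u i] ++ drop i.+2 u).
exists (take i u), (drop i.+2 u), (nth 0 u i), (nth 0 u i.+1); split; first by lia.
split => //.
by rewrite /= -(drop_nth 0 Hi) -(drop_nth 0 (ltnW Hi)) cat_take_drop.
Qed.

Theorem theorem4p1p10 (w : word) :
  sp_word w ->
  (forall (w' : word) (t : nat), rw_steps w w' t -> t <= 'C(c_of w, 2)) /\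
  (forall (w' : word) (t : nat), rw_steps w w' t -> rw_terminal w' ->
      anti_normal w' /\ F_eq w w').
Proof.
move=> Hsp; split.
- move=> w' t H; exact: (bound _ _ erefl _ _ H).
- move=> w' t H Ht; have [H1 H2] := steps_props _ _ _ H.
  split => //; exact: term_anti (H1 Hsp) Ht.
Qed.
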